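(* Let $(R,\mathfrak{m})$ be a finite local ring with residue field $\mathbb{F}_q$ and characteristic $p^N$. Consider a chain of subrings $R_{[\mathbb{F}_q]}=R_l\subseteq R_{l-1}\subseteq\cdots\subseteq R_1\subseteq R_0=R$. This chain is maximal (i.e. each $R_i$ is a maximal subring of $R_{i-1}$) if and only if $[R_{i-1}:R_i]=q$ for all $i=1,\dots,l$. Moreover, for such a maximal chain, $p^kR\subseteq R_k$ for every $k=0,1,\dots,l$.
   Context: All rings are commutative and unital. For a finite local ring $(R,\mathfrak{m})$ with residue field $\mathbb{F}_q$, $T(R)$ denotes the unique subgroup of $R^\times$ mapping isomorphically onto $\mathbb{F}_q^\times$ under reduction mod $\mathfrak{m}$ (Teichmuller units), and $R_{[\mathbb{F}_q]}$ denotes the $\mathbb{Z}/p^N\mathbb{Z}$-span of $T(R)$, which is the smallest subring of $R$ with residue field $\mathbb{F}_q$. Subrings of $R$ are local and their residue fields are naturally subfields of $\mathbb{F}_q$; indices are indices of additive groups. *)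

(* Defs.v *)
From HB Require Import structures.
From mathcomp Require Import all_boot all_order all_algebra.
Set Implicit Arguments. Unset Strict Implicit. Unset Printing Implicit Defensive.
Import GRing.Theory.
Local Open Scope ring_scope.

Section Defs.
Variable R : finComUnitRingType.

Definition is_ideal (I : {set R}) : Prop :=
  [/\ 0 \in I,
      (forall x y, x \in I -> y \in I -> x - y \in I) &
      (forall r x, x \in I -> r * x \in I)].

Definition is_proper_ideal (I : {set R}) : Prop := is_ideal I /\ 1 \notin I.

Definition is_maximal_ideal (I : {set R}) : Prop :=
  is_proper_ideal I /\
  (forall J : {set R}, is_proper_ideal J -> I \subset J -> J = I).

Definition local_ring_with (m : {set R}) : Prop :=
  is_maximal_ideal m /\ (forall I, is_maximal_ideal I -> I = m).

Definition residue_card (m : {set R}) : nat := (#|[set: R]| %/ #|m|)%N.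

Definition char_eq (n : nat) : Prop :=
  [/\ (0 < n)%N, (n%:R : R) = 0 & forall k, (0 < k < n)%N -> (k%:R : R) != 0].

Definition is_subring (S : {set R}) : Prop :=
  [/\ 1 \in S,
      (forall x y, x \in S -> y \in S -> x - y \in S) &
      (forall x y, x \in S -> y \in S -> x * y \in S)].

Definition maximal_subring (S S' : {set R}) : Prop :=
  [/\ is_subring S, is_subring S', S \proper S' &
      forall T : {set R}, is_subring T -> S \subset T -> T \subset S' ->
        T = S \/ T = S'].

(* T is a subgroup of R^x mapping isomorphically onto (R/m)^x under
   reduction mod m (boolean, finite quantifiers) *)
Definition is_teichmuller (m T : {set R}) : bool :=
  [&& [forall x in T, x \is a GRing.unit],
      1 \in T,
      [forall x in T, forall y in T, x * y \in T],
      [forall x in T, x^-1 \in T],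
      [forall x in T, forall y in T, (x - y \in m) ==> (x == y)] &
      [forall u, (u \notin m) ==> [exists t in T, u - t \in m]]].

(* T(R): the (unique) Teichmuller subgroup *)
Definition teich (m : {set R}) : {set R} :=
  odflt set0 [pick T : {set R} | is_teichmuller m T].

(* additive subgroups and the Z-span (= Z/p^N-span) of a set *)
Definition is_addgroup (S : {set R}) : bool :=
  (0 \in S) && [forall x in S, forall y in S, x - y \in S].

Definition zspan (A : {set R}) : {set R} :=
  [set x | [forall S : {set R}, (is_addgroup S && (A \subset S)) ==> (x \in S)]].

Definition R_Fq (m : {set R}) : {set R} := zspan (teich m).

Definition mulnset (n : nat) : {set R} := [set (n%:R : R) * x | x in [set: R]].

End Defs.

(* Main.v *)
Require Import Defs.
From HB Require Import structures.
From mathcomp Require Import all_boot all_order all_algebra.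
From mathcomp Require Import zify ring.
From Stdlib Require Import Classical.
Set Implicit Arguments. Unset Strict Implicit.
Import GRing.Theory.
Local Open Scope ring_scope.

Lemma sub0 (R : finComUnitRingType) (S : {set R}) : is_subring S -> 0 \in S.
Proof. by case=> S1 SB _; rewrite -(subrr 1) SB. Qed.

Lemma subN (R : finComUnitRingType) (S : {set R}) : is_subring S -> forall x, x \in S -> - x \in S.
Proof. move=> HS x xS; have S0 := sub0 HS; case: HS => _ SB _; by rewrite -sub0r SB. Qed.

Lemma subD (R : finComUnitRingType) (S : {set R}) : is_subring S -> forall x y, x \in S -> y \in S -> x + y \in S.
Proof. move=> HS x y xS yS; rewrite -[y]opprK; case: (HS) => _ SB _; by rewrite SB ?subN. Qed.

Lemma subB (R : finComUnitRingType) (S : {set R}) : is_subring S -> forall x y, x \in S -> y \in S -> x - y \in S.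
Proof. by case. Qed.

Lemma subM (R : finComUnitRingType) (S : {set R}) : is_subring S -> forall x y, x \in S -> y \in S -> x * y \in S.
Proof. by case. Qed.

Lemma sub1 (R : finComUnitRingType) (S : {set R}) : is_subring S -> 1 \in S.
Proof. by case. Qed.

Lemma subnat (R : finComUnitRingType) (S : {set R}) : is_subring S -> forall n, (n%:R : R) \in S.
Proof.
move=> HS; elim=> [|n IH]; first exact: sub0.
by rewrite -addn1 natrD subD // sub1.
Qed.

Lemma subV (R : finComUnitRingType) (S : {set R}) : is_subring S -> forall u, u \in S -> u \is a GRing.unit -> u^-1 \in S.
Proof.
move=> HS u uS uU.
have sub : [set u * s | s in S] \subset S.
  by apply/subsetP => x /imsetP[s sS ->]; rewrite subM.
have E : [set u * s | s in S] = S.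
  apply/eqP; rewrite eqEcard sub card_in_imset ?leqnn //.
  by move=> a b _ _; apply: mulrI.
have : 1 \in [set u * s | s in S] by rewrite E sub1.
case/imsetP => s sS H1.
have -> : u^-1 = s by rewrite -[u^-1]mulr1 H1 (mulKr uU).
done.
Qed.

Lemma idealN (R : finComUnitRingType) (I : {set R}) : is_ideal I -> forall x, x \in I -> - x \in I.
Proof. case=> I0 IB _ x xI; by rewrite -sub0r IB. Qed.

Lemma idealD (R : finComUnitRingType) (I : {set R}) : is_ideal I -> forall x y, x \in I -> y \in I -> x + y \in I.
Proof. move=> HI x y xI yI; rewrite -[y]opprK; case: (HI) => _ IB _; by rewrite IB ?idealN. Qed.

Lemma idealMr (R : finComUnitRingType) (I : {set R}) : is_ideal I -> forall x r, x \in I -> x * r \in I.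
Proof. case=> _ _ IM x r xI; by rewrite mulrC IM. Qed.

Lemma exists_max (R : finComUnitRingType) (I : {set R}) :
  is_proper_ideal I -> exists J, is_maximal_ideal J /\ I \subset J.
Proof.
move=> HI.
have [n Hn] : exists n, (#|[set: R]| - #|I| <= n)%N by exists (#|[set: R]| - #|I|)%N.
elim: n I Hn HI => [|n IH] I Hn HI;
  case: (classic (exists J, is_proper_ideal J /\ I \proper J)) => [[J [HJ IJ]]|NJ].
- exfalso; have := proper_card IJ; have := subset_leq_card (subsetT J).
  move: Hn; move: (#|[set: R]|) (#|I|) (#|J|) => a b c; lia.
- exists I; split; last exact: subxx. split => // J HJ IJ; apply/eqP; apply: contraT => neq.
  exfalso; apply: NJ; exists J; split => //; by rewrite properEneq eq_sym neq.
- have [|K [HK JK]] := IH J _ HJ.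
    have := proper_card IJ; have := subset_leq_card (subsetT J).
    move: Hn; move: (#|[set: R]|) (#|I|) (#|J|) => a b c; lia.
  exists K; split => //; apply: subset_trans JK; exact: proper_sub.
- exists I; split; last exact: subxx. split => // J HJ IJ; apply/eqP; apply: contraT => neq.
  exfalso; apply: NJ; exists J; split => //; by rewrite properEneq eq_sym neq.
Qed.

Lemma notin_m_unit (R : finComUnitRingType) (m : {set R}) :
  local_ring_with m -> forall x : R, x \notin m -> x \is a GRing.unit.
Proof.
move=> [Hm Huniq] x xm; case: (boolP (x \is a GRing.unit)) => // xU.
have HI : is_proper_ideal [set x * r | r in [set: R]].
  split; first split.
  - by apply/imsetP; exists 0; [exact: in_setT | by rewrite mulr0].
  - move=> a b /imsetP[r _ ->] /imsetP[s _ ->]; apply/imsetP; exists (r - s); [exact: in_setT | by rewrite mulrBr].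
  - move=> r a /imsetP[s _ ->]; apply/imsetP; exists (r * s); [exact: in_setT | exact: mulrCA].
  - apply/imsetP => [[r _ H1]]; move/negP: xU; apply; apply/unitrP; exists r.
    by rewrite mulrC -H1.
have [J [HJ IJ]] := exists_max HI.
rewrite (Huniq J HJ) in IJ.
exfalso; move/negP: xm; apply; apply: (subsetP IJ); apply/imsetP; exists 1; [exact: in_setT | by rewrite mulr1].
Qed.

Lemma teich_unit (R : finComUnitRingType) (m Tm : {set R}) :
  is_teichmuller m Tm -> forall t, t \in Tm -> t \is a GRing.unit.
Proof. by case/andP => /forall_inP TU _ t tT; exact: TU. Qed.

Lemma teich1 (R : finComUnitRingType) (m Tm : {set R}) : is_teichmuller m Tm -> 1 \in Tm.
Proof. by case/andP => _ /and5P[]. Qed.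

Lemma teich_inj (R : finComUnitRingType) (m Tm : {set R}) :
  is_teichmuller m Tm -> forall t1 t2, t1 \in Tm -> t2 \in Tm -> t1 - t2 \in m -> t1 = t2.
Proof.
case/andP => _ /and5P[_ _ _ /forall_inP TI _] t1 t2 t1T t2T H.
by move/forall_inP: (TI t1 t1T) => /(_ t2 t2T) /implyP /(_ H) /eqP.
Qed.

Lemma teich_cover (R : finComUnitRingType) (m Tm : {set R}) :
  is_teichmuller m Tm -> forall u, u \notin m -> exists2 t, t \in Tm & u - t \in m.
Proof.
case/andP => _ /and5P[_ _ _ _ /forallP TC] u um.
by move/implyP: (TC u) => /(_ um) /exists_inP.
Qed.

Lemma local_ideal (R : finComUnitRingType) (m : {set R}) : local_ring_with m -> is_ideal m.
Proof. by case=> [[[]]]. Qed.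

Lemma local_1 (R : finComUnitRingType) (m : {set R}) : local_ring_with m -> 1 \notin m.
Proof. by case=> [[[]]]. Qed.

Lemma teich_notm (R : finComUnitRingType) (m Tm : {set R}) :
  local_ring_with m -> is_teichmuller m Tm -> forall t, t \in Tm -> t \notin m.
Proof.
move=> Hl HT t tT; apply/negP => tm.
have := local_1 Hl; rewrite -(mulVr (teich_unit HT tT)).
by case: (local_ideal Hl) => _ _ IM; rewrite IM.
Qed.

Lemma decomp (R : finComUnitRingType) (m Tm : {set R}) :
  local_ring_with m -> is_teichmuller m Tm -> forall x : R, exists2 t : R, t \in (0:R) |: Tm & x - t \in m.
Proof.
move=> Hl HT x; case: (boolP (x \in m)) => xm.
  by exists 0; rewrite ?setU11 ?subr0.
have [t tT H] := teich_cover HT xm; exists t => //; by rewrite setU1r.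
Qed.

Lemma t0_inj (R : finComUnitRingType) (m Tm : {set R}) :
  local_ring_with m -> is_teichmuller m Tm ->
  forall t1 t2 : R, t1 \in (0:R) |: Tm -> t2 \in (0:R) |: Tm -> t1 - t2 \in m -> t1 = t2.
Proof.
move=> Hl HT t1 t2 /setU1P[->|t1T] /setU1P[->|t2T] H //.
- exfalso; move/negP: (teich_notm Hl HT t2T); apply.
  by have := idealN (local_ideal Hl) H; rewrite sub0r opprK.
- exfalso; move/negP: (teich_notm Hl HT t1T); apply; by rewrite -[t1]subr0.
- exact: (teich_inj HT).
Qed.

Lemma t0_unit (R : finComUnitRingType) (m Tm : {set R}) :
  local_ring_with m -> is_teichmuller m Tm ->
  forall t1 t2 : R, t1 \in (0:R) |: Tm -> t2 \in (0:R) |: Tm -> t1 != t2 -> t1 - t2 \is a GRing.unit.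
Proof.
move=> Hl HT t1 t2 t1T t2T neq; apply: (notin_m_unit Hl); apply/negP => H.
by move/negP: neq; apply; apply/eqP; apply: (t0_inj Hl HT).
Qed.

Lemma q_gt1 (R : finComUnitRingType) (m Tm : {set R}) :
  is_teichmuller m Tm -> (1 < #|(0%R:R) |: Tm|)%N.
Proof.
move=> HT; rewrite cardsU1.
have -> : (0 : R) \notin Tm.
  by apply/negP => /(teich_unit HT); rewrite unitr0.
have : (0 < #|Tm|)%N by apply/card_gt0P; exists 1; exact: teich1 HT.
by [].
Qed.

Lemma card_R (R : finComUnitRingType) (m Tm : {set R}) :
  local_ring_with m -> is_teichmuller m Tm -> #|[set: R]| = (#|(0%R:R) |: Tm| * #|m|)%N.
Proof.
move=> Hl HT.
have -> : [set: R] = [set u.1 + u.2 | u in setX ((0:R) |: Tm) m].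
  apply/eqP; rewrite eqEsubset subsetT andbT; apply/subsetP => x _.
  have [t tT H] := decomp Hl HT x.
  apply/imsetP; exists (t, x - t); first by rewrite in_setX tT H.
  by rewrite /= addrC subrK.
rewrite card_in_imset ?cardsX //.
move=> [t1 a1] [t2 a2]; rewrite !in_setX /= => /andP[t1T a1m] /andP[t2T a2m] E.
have Et : t1 = t2.
  apply: (t0_inj Hl HT) => //.
  have -> : t1 - t2 = a2 - a1.
    by rewrite -[t1](addrK a1) E; ring.
  by case: (local_ideal Hl) => _ IB _; rewrite IB.
by move: E; rewrite Et => /addrI ->.
Qed.

Lemma residue_q (R : finComUnitRingType) (m Tm : {set R}) :
  local_ring_with m -> is_teichmuller m Tm -> residue_card m = #|(0%R:R) |: Tm|.
Proof.
move=> Hl HT; rewrite /residue_card (card_R Hl HT) mulnK //.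
by apply/card_gt0P; exists 0; case: (local_ideal Hl).
Qed.

Lemma descent (R : finComUnitRingType) (m S S' : {set R}) :
  local_ring_with m -> is_subring S -> is_subring S' ->
  forall w, w \in S' -> w \in m -> w \notin S ->
  exists y, [/\ y \in S', y \in m, y \notin S & forall z, z \in S' -> z \in m -> y * z \in S].
Proof.
move=> Hl HS HS'.
have Hid := local_ideal Hl.
suff H : forall n (w : R), (#|[set (w * r)%R | r in [set: R]]| < n)%N -> w \in S' -> w \in m -> w \notin S ->
  exists y, [/\ y \in S', y \in m, y \notin S & forall z, z \in S' -> z \in m -> y * z \in S].
  by move=> w; apply: (H _ w (ltnSn _)).
elim=> [|n IH] w //.
move=> Hn wS' wm wS.
case: (boolP [forall z, ((z \in S') && (z \in m)) ==> (w * z \in S)]) => [/forallP Hall|].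
  exists w; split => // z zS' zm; by move/implyP: (Hall z); apply; rewrite zS'.
case/forallPn => z; rewrite negb_imply => /andP[/andP[zS' zm] wzS].
apply: (IH (w * z)) => //.
- rewrite ltnS in Hn; apply: leq_trans _ Hn; apply: proper_card; apply/properP; split.
    apply/subsetP => x /imsetP[r _ ->]; apply/imsetP; exists (z * r); first exact: in_setT.
    by rewrite mulrA.
  exists w; first by apply/imsetP; exists 1; [exact: in_setT | by rewrite mulr1].
  apply/negP => /imsetP[r _ E].
  have U : 1 - z * r \is a GRing.unit.
    apply: (notin_m_unit Hl); apply/negP => H.
    move/negP: (local_1 Hl); apply.
    have -> : (1 : R) = (1 - z * r) + z * r by rewrite subrK.
    by rewrite idealD // idealMr.
  have H0 : w * (1 - z * r) = 0 by rewrite mulrBr mulr1 mulrA -E subrr.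
  have w0 : w = 0 by have := congr1 (fun v => v * (1 - z * r)^-1) H0; rewrite /= mulrK // mul0r.
  by move/negP: wS; apply; rewrite w0 (sub0 HS).
- exact: (subM HS' wS' zS').
- exact: idealMr.
Qed.

Lemma key (R : finComUnitRingType) (m Tm S S' : {set R}) :
  local_ring_with m -> is_teichmuller m Tm ->
  is_subring S -> is_subring S' -> S \subset S' -> S != S' -> Tm \subset S ->
  exists T : {set R}, [/\ is_subring T, S \subset T, T != S & T \subset S'] /\
     (#|T| = (#|(0%R:R) |: Tm| * #|S|)%N /\
     forall z x, z \in S -> z \in m -> x \in T -> z * x \in S).
Proof.
move=> Hl HT HS HS' SS' neq TS.
have Hid := local_ideal Hl.
have T0S : forall t : R, t \in (0:R) |: Tm -> t \in S.
  by move=> t /setU1P[->|tT]; [exact: sub0 | exact: (subsetP TS)].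
have [x xS' xS] : exists2 x, x \in S' & x \notin S.
  have : S \proper S' by rewrite properEneq neq SS'.
  by case/properP => _ [z ? ?]; exists z.
have [t tT tm] := decomp Hl HT x.
have xtS : x - t \notin S.
  apply/negP => H; move/negP: xS; apply; rewrite -(subrK t x).
  exact: (subD HS H (T0S t tT)).
have [y [yS' ym yS Hy]] :=
  descent Hl HS HS' (subB HS' xS' (subsetP SS' _ (T0S _ tT))) tm xtS.
pose T : {set R} := [set (u.1 + u.2 * y : R) | u in @setX R R S ((0:R) |: Tm)].
have memT : forall s1 s2, s1 \in S -> s2 \in S -> s1 + s2 * y \in T.
  move=> s1 s2 s1S s2S.
  have [t2 t2T t2m] := decomp Hl HT s2.
  apply/imsetP; exists (s1 + (s2 - t2) * y, t2).
    rewrite in_setX /= t2T andbT.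
    have K : y * (s2 - t2) \in S.
      apply: Hy => //; apply: (subsetP SS'); exact: (subB HS s2S (T0S _ t2T)).
    have K2 := subD HS s1S K. rewrite mulrC. exact K2.
  by rewrite /=; ring.
have HTs : is_subring T.
  split.
  - have -> : (1:R) = 1 + 0 * y by rewrite mul0r addr0.
    exact: memT (sub1 HS) (sub0 HS).
  - move=> a b /imsetP[[s1 t1]]; rewrite in_setX => /andP[/= s1S t1T] ->.
    move=> /imsetP[[s2 t2]]; rewrite in_setX => /andP[/= s2S t2T] ->.
    have -> : s1 + t1 * y - (s2 + t2 * y) = (s1 - s2) + (t1 - t2) * y by ring.
    by apply: memT; [exact: (subB HS s1S s2S) | exact: (subB HS (T0S _ t1T) (T0S _ t2T))].
  - move=> a b /imsetP[[s1 t1]]; rewrite in_setX => /andP[/= s1S t1T] ->.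
    move=> /imsetP[[s2 t2]]; rewrite in_setX => /andP[/= s2S t2T] ->.
    have -> : (s1 + t1 * y) * (s2 + t2 * y) =
      (s1 * s2 + t1 * t2 * (y * y)) + (s1 * t2 + t1 * s2) * y by ring.
    have t1S := T0S _ t1T; have t2S := T0S _ t2T.
    apply: memT; [exact: (subD HS (subM HS s1S s2S) (subM HS (subM HS t1S t2S) (Hy y yS' ym)))
                 | exact: (subD HS (subM HS s1S t2S) (subM HS t1S s2S))].
exists T; split; [split => // | split].
- apply/subsetP => s sS; have -> : s = s + 0 * y by rewrite mul0r addr0.
  exact: memT sS (sub0 HS).
- apply/eqP => E; move/negP: yS; apply; rewrite -E.
  have -> : y = 0 + 1 * y by rewrite mul1r add0r.
  exact: memT (sub0 HS) (sub1 HS).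
- apply/subsetP => a /imsetP[[s1 t1]]; rewrite in_setX => /andP[/= s1S t1T] ->.
  exact: (subD HS' (subsetP SS' _ s1S) (subM HS' (subsetP SS' _ (T0S _ t1T)) yS')).
- rewrite card_in_imset; first by rewrite cardsX mulnC.
  move=> [s1 t1] [s2 t2]; rewrite !in_setX /= => /andP[s1S t1T] /andP[s2S t2T] E.
  have Et : t1 = t2.
    apply/eqP; apply: contraT => neq'.
    have U := t0_unit Hl HT t1T t2T neq'.
    exfalso; move/negP: yS; apply.
    have E2 : s2 - s1 = (t1 - t2) * y by rewrite -[s2](addrK (t2 * y)) -E; ring.
    have -> : y = (t1 - t2)^-1 * (s2 - s1) by rewrite E2 mulKr.
    exact: (subM HS (subV HS (subB HS (T0S _ t1T) (T0S _ t2T)) U) (subB HS s2S s1S)).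
  by move: E; rewrite Et => /addIr ->.
- move=> z a zS zm /imsetP[[s1 t1]]; rewrite in_setX => /andP[/= s1S t1T] ->.
  have -> : z * (s1 + t1 * y) = z * s1 + t1 * (y * z) by ring.
  exact: (subD HS (subM HS zS s1S) (subM HS (T0S _ t1T) (Hy z (subsetP SS' _ zS) zm))).
Qed.

Unset Implicit Arguments. Set Strict Implicit.

Theorem proposition34 (R : finComUnitRingType) (m : {set R}) (p N : nat)
    (l : nat) (Rs : nat -> {set R}) :
  local_ring_with m -> prime p -> char_eq R (p ^ N)%N ->
  Rs 0%N = [set: R] -> Rs l = R_Fq m ->
  (forall i, (i <= l)%N -> is_subring (Rs i)) ->
  (forall i, (0 < i <= l)%N -> Rs i \subset Rs i.-1) ->
  ((forall i, (0 < i <= l)%N -> maximal_subring (Rs i) (Rs i.-1)) <->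
   (forall i, (0 < i <= l)%N -> (#|Rs i.-1| %/ #|Rs i|)%N = residue_card m))
  /\
  ((forall i, (0 < i <= l)%N -> maximal_subring (Rs i) (Rs i.-1)) ->
   forall k, (k <= l)%N -> mulnset R (p ^ k)%N \subset Rs k).
Proof.
move=> Hl Hp Hch R0 Rl Hsub Hchain.
have H1 := sub1 (Hsub l (leqnn l)).
have [Tm HT TRl] : exists2 Tm, is_teichmuller m Tm & Tm \subset Rs l.
  move: H1; rewrite Rl /R_Fq /teich.
  case: pickP => [T HT' | Hnone] /= H1.
  - exists T => //; apply/subsetP => x xT; rewrite inE; apply/forallP => S.
    by apply/implyP => /andP[_ TS]; exact: (subsetP TS).
  - exfalso; move: H1; rewrite inE => /forallP /(_ [set (0:R)]) /implyP.
    have HG : is_addgroup [set (0:R)] && (set0 \subset [set (0:R)]).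
      rewrite sub0set andbT /is_addgroup set11 /=.
      apply/forall_inP => x /set1P ->; apply/forall_inP => y /set1P ->.
      by rewrite subrr set11.
    by move=> /(_ HG) /set1P /eqP; rewrite oner_eq0.
have Rl_sub : forall d, (d <= l)%N -> Rs l \subset Rs (l - d)%N.
  elim=> [|d IH] Hd; first by rewrite subn0.
  apply: subset_trans (IH (ltnW Hd)) _.
  rewrite subnS; apply: Hchain; apply/andP; split; lia.
have TRs : forall i, (i <= l)%N -> Tm \subset Rs i.
  move=> i Hi; apply: subset_trans TRl _.
  have := Rl_sub (l - i)%N (leq_subr _ _); rewrite subKn //.
have Hq := residue_q Hl HT.
have q2 := q_gt1 HT.
have Hpos : forall i, (i <= l)%N -> (0 < #|Rs i|)%N.
  by move=> i Hi; apply/card_gt0P; exists 1; exact: sub1 (Hsub i Hi).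
have Hmax_card : forall i, (0 < i <= l)%N -> maximal_subring (Rs i) (Rs i.-1) ->
    #|Rs i.-1| = (#|(0%R:R) |: Tm| * #|Rs i|)%N /\
    forall z x, z \in Rs i -> z \in m -> x \in Rs i.-1 -> z * x \in Rs i.
  move=> i Hi [HS HS' Hprop Hm].
  have Hil : (i <= l)%N by case/andP: Hi.
  have neq : Rs i != Rs i.-1 by move: Hprop; rewrite properEneq => /andP[].
  have [T [[HTs ST TneS TS'] [cardT HzT]]] :=
    key Hl HT HS HS' (proper_sub Hprop) neq (TRs i Hil).
  case: (Hm T HTs ST TS') => E; first by rewrite E eqxx in TneS.
  by rewrite -E; split.
split; first split.
- move=> Hmax i Hi.
  have Hil : (i <= l)%N by case/andP: Hi.
  have [c _] := Hmax_card i Hi (Hmax i Hi).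
  by rewrite c mulnK ?Hq // Hpos.
- move=> Hidx i Hi.
  have Hil : (i <= l)%N by case/andP: Hi.
  have HS := Hsub i Hil.
  have HS' := Hsub i.-1 (leq_trans (leq_pred i) Hil).
  have SS' := Hchain i Hi.
  have TS := TRs i Hil.
  have Hqi := Hidx i Hi; rewrite Hq in Hqi.
  have Spos := Hpos i Hil.
  have neq : Rs i != Rs i.-1.
    apply/eqP => E; move: Hqi; rewrite -E divnn Spos => Hqi.
    by rewrite -Hqi in q2.
  split => //; first by rewrite properEneq neq SS'.
  move=> U HU SU US'.
  case: (eqVneq U (Rs i)) => [->|nUS]; first by left.
  case: (eqVneq U (Rs i.-1)) => [->|nUS']; first by right.
  exfalso.
  have nSU : Rs i != U by rewrite eq_sym.
  have [T1 [[_ _ _ T1U] [c1 _]]] := key Hl HT HS HU SU nSU TS.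
  have [T2 [[_ _ _ T2S'] [c2 _]]] := key Hl HT HU HS' US' nUS' (subset_trans TS SU).
  have l1 := subset_leq_card T1U; have l2 := subset_leq_card T2S'.
  have d1 := divn_eq #|Rs i.-1| #|Rs i|; have d2 := ltn_pmod #|Rs i.-1| Spos.
  rewrite Hqi in d1; rewrite c1 in l1; rewrite c2 in l2.
  move: l1 l2 d1 d2 q2 Spos.
  move: (#|Rs i.-1|) (#|Rs i|) (#|U|) (#|(0%R:R) |: Tm|) (#|Rs i.-1| %% #|Rs i|)%N.
  move=> c a b q r l1 l2 d1 d2 q2 Spos.
  have h1 : (q * (q * a) <= c)%N := leq_trans (leq_mul (leqnn q) l1) l2.
  have h2 : (c < q * a + a)%N by rewrite d1 ltn_add2l.
  have h3 : (a <= q * a)%N by rewrite leq_pmull // ltnW.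
  have h4 : (2 * (q * a) <= q * (q * a))%N by rewrite leq_mul2r q2 orbT.
  clear -h1 h2 h3 h4; move: h1 h2 h3 h4; move: (q * a)%N (q * (q * a))%N => x y; lia.
- move=> Hmax k Hk.
  have Hpm : (p%:R : R) \in m.
    apply: contraT => H; have U := notin_m_unit Hl H.
    case: Hch => _ HpN _.
    have := unitrX N U; rewrite -natrX HpN.
    by rewrite unitr0.
  elim: k Hk => [|k IH] Hk.
    by rewrite R0; apply: subsetT.
  apply/subsetP => _ /imsetP[x _ ->].
  have Hk' : (k <= l)%N by apply: ltnW.
  have Hin : (p ^ k)%:R * x \in Rs k.
    apply: (subsetP (IH Hk')); apply/imsetP; exists x => //; exact: in_setT.
  have Hi : (0 < k.+1 <= l)%N by rewrite Hk.
  have [_ Hz] := Hmax_card k.+1 Hi (Hmax k.+1 Hi).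
  rewrite expnS natrM -mulrA.
  exact: (Hz _ _ (subnat (Hsub k.+1 Hk) p) Hpm Hin).
Qed.
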